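(* Let $D\in\mathbb{N}_+$, $T\in\mathbb{N}$, and let $\mathcal{D}:\mathbb{R}^{D+T}\times\mathbb{R}^{D+T}\to[0,\infty)$ admit a neural (quasi-)metric representation (so $\mathcal{D}(x,y)$ depends only on $x_{1:D},y_{1:D}$). Then: (a) $\mathcal{D}$, viewed as a function of the spatial coordinates $(x_{1:D},y_{1:D})\in\mathbb{R}^D\times\mathbb{R}^D$, is a quasi-metric on $\mathbb{R}^D$; (b) if each $\mathsf{W}_j$ in the representation is orthogonal and $0<s_j,l_j\le1$ for all $j$, then it is a metric on $\mathbb{R}^D$; (c) if $T\in\mathbb{N}_+$, then $\mathcal{D}$ is a pseudo-quasi-metric on $\mathbb{R}^{D+T}$.
   Context: For $s,l>0$ define $\sigma_{s,l}:\mathbb{R}\to\mathbb{R}$ by $\sigma_{s,l}(x)=\operatorname{sgn}(x)|x|^s$ if $|x|<1$ and $\operatorname{sgn}(x)|x|^l$ if $|x|\ge1$ ($\operatorname{sgn}(x)=1$ for $x\ge0$, $-1$ otherwise); $\sigma\bullet$ is componentwise application. $I^+_D$ is the set of $D\times D$ matrices $\lambda I_D+|\tilde W|$ with $\lambda>0$, $\tilde W$ an arbitrary real $D\times D$ matrix, $|\cdot|$ entrywise absolute value. For $x\in\mathbb{R}^{D+T}$, $x_{1:D}$ denotes its first $D$ coordinates. $\mathcal{D}$ admits a neural (quasi-)metric representation if there are $J\in\mathbb{N}_+$, $s_0,l_0,\dots,s_J,l_J>0$, $\mathsf{W}_j\in I^+_D$ for $j<J$ and $\mathsf{W}_J\in(0,\infty)^{1\times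 D}$ such that $\mathcal{D}(x,y)=\mathsf{W}_J\sigma_{s_J,l_J}\bullet(u_{J-1})$, $u_j=\mathsf{W}_j\sigma_{s_j,l_j}\bullet(u_{j-1})$ for $j=1,\dots,J-1$, and $u_0=|\sigma_{s_0,l_0}\bullet(x_{1:D})-\sigma_{s_0,l_0}\bullet(y_{1:D})|$ (componentwise absolute value). A quasi-metric on a set $X$ is $d:X\times X\to[0,\infty)$ with $d(x,y)=0\iff x=y$, $d(x,y)=d(y,x)$, and $d(x,y)\le C(d(x,z)+d(z,y))$ for some constant $C\ge1$ and all $x,y,z$; it is a metric if $C=1$ works. A pseudo-quasi-metric satisfies the same except that $d(x,y)=0$ need not imply $x=y$ (but $d(x,x)=0$). *)

(* Defs.v *)
From HB Require Import structures.
From mathcomp Require Import all_boot all_order all_algebra.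
From mathcomp Require Import reals exp.
Set Implicit Arguments. Unset Strict Implicit. Unset Printing Implicit Defensive.
Import Order.TTheory GRing.Theory Num.Theory.
Local Open Scope ring_scope.

Section Neural.
Variable R : realType.

Definition sgn (x : R) : R := if 0 <= x then 1 else -1.

Definition sigma_sl (s l : R) (x : R) : R :=
  if `|x| < 1 then sgn x * powR `|x| s else sgn x * powR `|x| l.

Definition sigma_vec (D : nat) (s l : R) (u : 'cV[R]_D) : 'cV[R]_D :=
  map_mx (sigma_sl s l) u.

Definition Iplus (D : nat) (W : 'M[R]_D) : Prop :=
  exists (lam : R) (Wt : 'M[R]_D), 0 < lam /\ W = lam%:M + map_mx Num.norm Wt.

Fixpoint neural_layer (D : nat) (s l : nat -> R) (W : nat -> 'M[R]_D)
  (xD yD : 'cV[R]_D) (j : nat) : 'cV[R]_D :=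
  match j with
  | 0 => map_mx Num.norm (sigma_vec (s 0) (l 0) xD - sigma_vec (s 0) (l 0) yD)
  | j'.+1 => W j *m sigma_vec (s j) (l j) (neural_layer s l W xD yD j')
  end.

Definition neural_output (D J : nat) (s l : nat -> R) (W : nat -> 'M[R]_D)
  (WJ : 'M[R]_(1, D)) (xD yD : 'cV[R]_D) : R :=
  (WJ *m sigma_vec (s J) (l J) (neural_layer s l W xD yD J.-1)) ord0 ord0.

Definition neural_rep (D T : nat) (Dist : 'cV[R]_(D + T) -> 'cV[R]_(D + T) -> R)
  (J : nat) (s l : nat -> R) (W : nat -> 'M[R]_D) (WJ : 'M[R]_(1, D)) : Prop :=
  (0 < J)%N /\
  (forall j, (j <= J)%N -> 0 < s j /\ 0 < l j) /\
  (forall j, (j < J)%N -> Iplus (W j)) /\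
  (forall k, 0 < WJ ord0 k) /\
  (forall x y : 'cV[R]_(D + T),
      Dist x y = neural_output J s l W WJ (usubmx x) (usubmx y)).

Definition admits_neural_rep (D T : nat)
  (Dist : 'cV[R]_(D + T) -> 'cV[R]_(D + T) -> R) : Prop :=
  exists J s l W WJ, @neural_rep D T Dist J s l W WJ.

Definition orthogonal_mx (m n : nat) (A : 'M[R]_(m, n)) : Prop :=
  A *m A^T = 1%:M.

End Neural.

Definition pseudo_quasi_metric (R : realType) (X : Type) (d : X -> X -> R) : Prop :=
  (forall x y, 0 <= d x y) /\ (forall x, d x x = 0) /\
  (forall x y, d x y = d y x) /\
  exists C : R, 1 <= C /\ forall x y z, d x y <= C * (d x z + d z y).

Definition quasi_metric (R : realType) (X : Type) (d : X -> X -> R) : Prop :=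
  (forall x y, 0 <= d x y) /\ (forall x y, d x y = 0 <-> x = y) /\
  (forall x y, d x y = d y x) /\
  exists C : R, 1 <= C /\ forall x y z, d x y <= C * (d x z + d z y).

Definition metric (R : realType) (X : Type) (d : X -> X -> R) : Prop :=
  (forall x y, 0 <= d x y) /\ (forall x y, d x y = 0 <-> x = y) /\
  (forall x y, d x y = d y x) /\
  (forall x y z, d x y <= d x z + d z y).

(* Main.v *)
Require Import Defs.
From HB Require Import structures.
From mathcomp Require Import all_boot all_order all_algebra.
From mathcomp Require Import reals exp.
From mathcomp Require Import lra.
Import Order.TTheory GRing.Theory Num.Theory.
Local Open Scope ring_scope.
Set Implicit Arguments. Unset Strict Implicit.


Section Phi.
Variable R : realType.
Implicit Types (p q t u a b c : R).

Definition phi p q t : R := if t < 1 then t `^ p else t `^ q.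

Lemma phi_ge0 p q t : 0 <= phi p q t.
Proof. by rewrite /phi; case: ifP => _; apply: powR_ge0. Qed.

Lemma phi0 p q : 0 < p -> phi p q 0 = 0.
Proof. by move=> p0; rewrite /phi ltr01 powR0 // gt_eqF. Qed.

Lemma one_pw p : 1 `^ p = 1 :> R.
Proof. by rewrite powR1. Qed.

Lemma pw_lt1 p t : 0 < p -> 0 <= t < 1 -> t `^ p < 1.
Proof.
move=> p0 /andP[t0 t1].
by rewrite -[X in _ < X](one_pw p); apply: gt0_ltr_powR; rewrite ?nnegrE.
Qed.

Lemma pw_ge1 p t : 0 <= p -> 1 <= t -> 1 <= t `^ p.
Proof.
move=> p0 t1.
rewrite -[X in X <= _](one_pw p); apply: ge0_ler_powR; rewrite ?nnegrE //.
exact: le_trans t1.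
Qed.

Lemma phi_lt p q t u : 0 < p -> 0 < q -> 0 <= t -> t < u -> phi p q t < phi p q u.
Proof.
move=> p0 q0 t0 tu; have u0 : 0 <= u by apply: ltW; apply: le_lt_trans tu.
rewrite /phi; case: ifP => t1; case: ifP => u1.
- by apply: gt0_ltr_powR; rewrite ?nnegrE.
- apply: (lt_le_trans (pw_lt1 p0 _)); first by rewrite t0 t1.
  by apply: pw_ge1; [exact: ltW | rewrite leNgt u1].
- by move: t1; rewrite (lt_trans tu u1).
- by apply: gt0_ltr_powR; rewrite ?nnegrE.
Qed.

Lemma phi_le p q t u : 0 < p -> 0 < q -> 0 <= t -> t <= u -> phi p q t <= phi p q u.
Proof.
move=> p0 q0 t0; rewrite le_eqVlt => /predU1P[->//|tu].
exact/ltW/phi_lt.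
Qed.

Lemma phi_gt0 p q t : 0 < p -> 0 < q -> 0 < t -> 0 < phi p q t.
Proof. by move=> p0 q0 t0; rewrite -(phi0 q p0); apply: phi_lt. Qed.

Lemma phi_scale p q c t : 0 < p -> 0 < q -> 1 <= c -> 0 <= t ->
  phi p q (c * t) <= c `^ p * c `^ q * phi p q t.
Proof.
move=> p0 q0 c1 t0; have c0 : 0 <= c by apply: le_trans c1.
have cp1 := pw_ge1 (ltW p0) c1; have cq1 := pw_ge1 (ltW q0) c1.
rewrite /phi; case: ifP => ct1; case: ifP => t1.
- rewrite powRM // [_ * c `^ q]mulrC -mulrA; apply: ler_peMl => //.
  by rewrite mulr_ge0 // powR_ge0.
- have t1' : 1 <= t by rewrite leNgt t1.
  have : 1 <= c * t by rewrite -[1]mul1r; apply: ler_pM.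
  by rewrite leNgt ct1.
- rewrite powRM // [c `^ p * c `^ q]mulrC -mulrA ler_wpM2l ?powR_ge0 //.
  have h1 : t `^ q <= 1 by apply/ltW/pw_lt1; rewrite ?t0.
  have h2 : 1 <= c `^ p * t `^ p by rewrite -powRM // pw_ge1 ?(ltW p0) // leNgt ct1.
  exact: le_trans h2.
- rewrite powRM // -mulrA; apply: ler_peMl => //; exact: mulr_ge0 (powR_ge0 _ _) (powR_ge0 _ _).
Qed.

Lemma le_x_pw p t : 0 < p -> p <= 1 -> 0 <= t <= 1 -> t <= t `^ p.
Proof.
move=> p0 p1 /andP[t0 t1]; move: t0; rewrite le_eqVlt => /predU1P[<-|t0].
  exact: powR_ge0.
by apply: ger1_powR; rewrite ?t0.
Qed.

Lemma pw_subadd p a b : 0 < p -> p <= 1 -> 0 <= a -> 0 <= b ->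
  (a + b) `^ p <= a `^ p + b `^ p.
Proof.
move=> p0 p1 a0 b0; set c := a + b.
have [c0|cpos] := eqVneq c 0.
  have a00 : a = 0 by rewrite /c in c0; lra.
  have b00 : b = 0 by rewrite /c in c0; lra.
  by rewrite c0 a00 b00 powR0 ?gt_eqF // addr0.
have cgt : 0 < c by rewrite lt_neqAle eq_sym cpos /c addr_ge0.
have ha : a = c * (a / c) by rewrite mulrC divfK.
have hb : b = c * (b / c) by rewrite mulrC divfK.
have ea : c `^ p * (a / c) <= a `^ p.
  rewrite [in X in _ <= X]ha powRM ?divr_ge0 ?(ltW cgt) //; apply: ler_wpM2l; first exact: powR_ge0.
  apply: le_x_pw => //; rewrite divr_ge0 ?(ltW cgt) //= ler_pdivrMr // mul1r.
  by rewrite /c lerDl.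
have eb : c `^ p * (b / c) <= b `^ p.
  rewrite [in X in _ <= X]hb powRM ?divr_ge0 ?(ltW cgt) //; apply: ler_wpM2l; first exact: powR_ge0.
  apply: le_x_pw => //; rewrite divr_ge0 ?(ltW cgt) //= ler_pdivrMr // mul1r.
  by rewrite /c lerDr.
have : c `^ p = c `^ p * (a / c) + c `^ p * (b / c).
  by rewrite -mulrDr -mulrDl divff // mulr1.
move=> ->; exact: lerD.
Qed.

Lemma phi_subadd_aux p q a b : 0 < p -> p <= 1 -> 0 < q -> q <= 1 ->
  0 <= b -> b <= a -> phi p q (a + b) <= phi p q a + phi p q b.
Proof.
move=> p0 p1 q0 q1 b0 ba; have a0 : 0 <= a by apply: le_trans ba.
rewrite /phi; case: ifP => ab1.
  have a1 : a < 1 by apply: le_lt_trans ab1; rewrite lerDl.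
  have b1 : b < 1 by apply: le_lt_trans ab1; rewrite lerDr.
  by rewrite a1 b1; apply: pw_subadd.
case: ifP => a1.
  have b1 : b < 1 by apply: le_lt_trans a1.
  rewrite b1 (le_trans (ler1_powR _ _)) //; first by rewrite leNgt ab1.
  apply: lerD; apply: le_x_pw => //; rewrite ?a0 ?b0 ltW //.
case: ifP => b1; last exact: pw_subadd.
(* a >= 1, b < 1 *)
have a1' : 1 <= a by rewrite leNgt a1.
have agt : 0 < a by apply: lt_le_trans a1'.
have -> : a + b = a * (1 + b / a) by rewrite mulrDr mulr1 mulrC divfK ?gt_eqF.
rewrite powRM ?addr_ge0 ?divr_ge0 //.
have h1 : (1 + b / a) `^ q <= 1 + b / a.
  by apply: ler1_powR => //; rewrite lerDl divr_ge0.
have h2 : a `^ q * (1 + b / a) <= a `^ q + b.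
  rewrite mulrDr mulr1 lerD2l mulrA mulrC ler_pdivrMl // mulrC.
  by rewrite [a * b]mulrC; apply: ler_wpM2l => //; exact: ler1_powR.
have h3 : a `^ q * (1 + b / a) `^ q <= a `^ q * (1 + b / a).
  by apply: ler_wpM2l => //; exact: powR_ge0.
apply: (le_trans h3); apply: (le_trans h2).
by rewrite lerD2l le_x_pw // b0 ltW.
Qed.

Lemma phi_subadd p q a b : 0 < p -> p <= 1 -> 0 < q -> q <= 1 ->
  0 <= a -> 0 <= b -> phi p q (a + b) <= phi p q a + phi p q b.
Proof.
move=> p0 p1 q0 q1 a0 b0; have [ba|ab] := leP b a.
  exact: phi_subadd_aux.
by rewrite addrC [X in _ <= X]addrC; apply: phi_subadd_aux => //; apply: ltW.
Qed.

Lemma phi_quasi p q C t a b : 0 < p -> 0 < q -> 1 <= C -> 0 <= t -> 0 <= a -> 0 <= b ->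
  t <= C * (a + b) ->
  phi p q t <= (2 * C) `^ p * (2 * C) `^ q * (phi p q a + phi p q b).
Proof.
move=> p0 q0 C1 t0 a0 b0 tC.
have C21 : 1 <= 2 * C by lra.
wlog ba : a b a0 b0 tC / b <= a.
  move=> H; have [ba|ab] := leP b a; first exact: H.
  rewrite addrC; apply: H => //; [by rewrite addrC | exact: ltW].
have t2 : t <= (2 * C) * a by apply: (le_trans tC); nra.
apply: (le_trans (phi_le p0 q0 t0 t2)).
apply: (le_trans (phi_scale p0 q0 C21 a0)).
rewrite ler_wpM2l ?mulr_ge0 ?powR_ge0 // lerDl; exact: phi_ge0.
Qed.

Lemma sigma_nneg p q t : 0 <= t -> sigma_sl p q t = phi p q t.
Proof. by move=> t0; rewrite /sigma_sl /phi /sgn t0 !mul1r ger0_norm. Qed.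

Lemma sigma_neg p q t : t < 0 -> sigma_sl p q t = - phi p q (- t).
Proof. by move=> t0; rewrite /sigma_sl /phi /sgn leNgt t0 /= ltr0_norm // !mulN1r; case: ifP. Qed.

Lemma sigma_lt p q t u : 0 < p -> 0 < q -> t < u -> sigma_sl p q t < sigma_sl p q u.
Proof.
move=> p0 q0 tu; have [t0|t0] := leP 0 t.
  by rewrite !sigma_nneg ?phi_lt // (le_trans t0 (ltW tu)).
rewrite sigma_neg //; have [u0|u0] := leP 0 u.
  rewrite sigma_nneg // (lt_le_trans _ (phi_ge0 _ _ _)) // oppr_lt0.
  by apply: phi_gt0; rewrite // oppr_gt0.
rewrite sigma_neg // ltrN2; apply: phi_lt => //; first by rewrite oppr_ge0 ltW.
by rewrite ltrN2.
Qed.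

Lemma sigma_inj p q t u : 0 < p -> 0 < q -> t != u -> sigma_sl p q t != sigma_sl p q u.
Proof.
move=> p0 q0; rewrite neq_lt => /orP[tu|ut].
  by rewrite lt_eqF // sigma_lt.
by rewrite gt_eqF // sigma_lt.
Qed.

End Phi.


Section Lay.
Variables (R : realType) (D : nat).

Lemma mx_step m (A : 'M[R]_(m, D)) (f : R -> R) (u v w : 'cV[R]_D) K r :
  (forall i k, 0 <= A i k) ->
  (forall k, f (u k ord0) <= K * (f (v k ord0) + f (w k ord0))) ->
  (A *m map_mx f u) r ord0 <= K * ((A *m map_mx f v) r ord0 + (A *m map_mx f w) r ord0).
Proof.
move=> A0 H; rewrite !mxE -big_split mulr_sumr /=; apply: ler_sum => k _.
rewrite !mxE -mulrDr mulrCA; exact: ler_wpM2l.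
Qed.

Lemma mx_ge0 m (A : 'M[R]_(m, D)) (f : R -> R) (u : 'cV[R]_D) r :
  (forall i k, 0 <= A i k) -> (forall k, 0 <= f (u k ord0)) ->
  0 <= (A *m map_mx f u) r ord0.
Proof.
move=> A0 H; rewrite !mxE; apply: sumr_ge0 => k _; rewrite !mxE mulr_ge0 //.
Qed.

Lemma mx_pos m (A : 'M[R]_(m, D)) (f : R -> R) (u : 'cV[R]_D) r i :
  (forall i k, 0 <= A i k) -> (forall k, 0 <= f (u k ord0)) ->
  0 < A r i -> 0 < f (u i ord0) ->
  0 < (A *m map_mx f u) r ord0.
Proof.
move=> A0 H Ari fi; rewrite !mxE (bigD1 i) //= mxE.
apply: (lt_le_trans (mulr_gt0 Ari fi)); rewrite lerDl.
by apply: sumr_ge0 => k _; rewrite mxE mulr_ge0.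
Qed.

Lemma Iplus_ge0 (W : 'M[R]_D) : Iplus W -> forall i k, 0 <= W i k.
Proof.
case=> lam [Wt [l0 ->]] i k; rewrite !mxE.
by apply: addr_ge0; [apply: mulrn_wge0; exact: ltW | exact: normr_ge0].
Qed.

Lemma Iplus_diag (W : 'M[R]_D) : Iplus W -> forall i, 0 < W i i.
Proof.
case=> lam [Wt [l0 ->]] i; rewrite !mxE eqxx mulr1n.
have := normr_ge0 (Wt i i); lra.
Qed.

Variables (J : nat) (s l : nat -> R) (W : nat -> 'M[R]_D).
Hypothesis hs : forall j, (j <= J)%N -> 0 < s j /\ 0 < l j.
Hypothesis hW : forall j, (j < J)%N -> Iplus (W j).

Notation u j x y := (neural_layer s l W x y j).
Implicit Types x y z : 'cV[R]_D.

Lemma lay_sym j x y : u j x y = u j y x.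
Proof.
elim: j => [|j IH] /=; last by rewrite IH.
by apply/matrixP => i k; rewrite !mxE distrC.
Qed.

Lemma lay_ge0 j x y i : (j < J)%N -> 0 <= u j x y i ord0.
Proof.
elim: j i => [|j IH] i jJ /=; first by rewrite !mxE normr_ge0.
have [s0 l0] := hs (ltnW jJ).
rewrite /sigma_vec; apply: mx_ge0; first exact: Iplus_ge0 (hW jJ).
move=> k; rewrite sigma_nneg ?phi_ge0 //; apply: IH; exact: ltnW.
Qed.

Lemma lay_zero j x : (j < J)%N -> u j x x = 0.
Proof.
elim: j => [|j IH] jJ /=; first by apply/matrixP => i k; rewrite !mxE subrr normr0.
have [s0 l0] := hs (ltnW jJ).
rewrite IH ?(ltnW jJ) //; apply/matrixP => i k; rewrite !mxE; apply: big1 => m _.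
by rewrite !mxE sigma_nneg // phi0 // mulr0.
Qed.

Lemma lay_pos j x y i : (j < J)%N -> x i ord0 != y i ord0 -> 0 < u j x y i ord0.
Proof.
move=> + xy; elim: j => [|j IH] jJ /=.
  have [s0 l0] := hs (leq0n J).
  by rewrite !mxE normr_gt0 subr_eq0 sigma_inj.
have [s0 l0] := hs (ltnW jJ).
have jJ' : (j < J)%N by exact: ltnW.
rewrite /sigma_vec; apply: (mx_pos (i := i)).
- exact: Iplus_ge0 (hW jJ).
- by move=> k; rewrite sigma_nneg ?phi_ge0 ?lay_ge0.
- exact: (Iplus_diag (hW jJ) i).
- by rewrite sigma_nneg ?lay_ge0 // phi_gt0 // IH.
Qed.

Lemma lay_quasi j : (j < J)%N -> exists C : R, 1 <= C /\
  forall x y z i, u j x y i ord0 <= C * (u j x z i ord0 + u j z y i ord0).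
Proof.
elim: j => [|j IH] jJ.
  by exists 1; split => // x y z i; rewrite mul1r !mxE ler_distD.
have jJ' : (j < J)%N by exact: ltnW.
have [s0 l0] := hs (ltnW jJ).
have [C [C1 HC]] := IH jJ'.
have C21 : 1 <= 2 * C by lra.
exists ((2 * C) `^ s j.+1 * (2 * C) `^ l j.+1); split.
  by apply: mulr_ege1; apply: pw_ge1 => //; apply: ltW.
move=> x y z i /=; rewrite /sigma_vec; apply: mx_step; first exact: Iplus_ge0 (hW jJ).
move=> k; rewrite !sigma_nneg ?lay_ge0 //; apply: phi_quasi; rewrite ?lay_ge0 //.
Qed.

Lemma lay_sub j : (j < J)%N -> (forall j, (j <= J)%N -> s j <= 1 /\ l j <= 1) ->
  forall x y z i, u j x y i ord0 <= u j x z i ord0 + u j z y i ord0.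
Proof.
move=> + h1; elim: j => [|j IH] jJ x y z i.
  by rewrite !mxE ler_distD.
have jJ' : (j < J)%N by exact: ltnW.
have [s0 l0] := hs (ltnW jJ); have [s1 l1] := h1 _ (ltnW jJ).
rewrite -[X in _ <= X]mul1r /=; rewrite /sigma_vec; apply: mx_step; first exact: Iplus_ge0 (hW jJ).
move=> k; rewrite mul1r !sigma_nneg ?lay_ge0 //.
apply: le_trans (phi_subadd _ _ _ _ _ _) => //; rewrite ?lay_ge0 //.
by apply: phi_le => //; rewrite ?lay_ge0 ?IH.
Qed.

End Lay.


Section Out.
Variables (R : realType) (D J : nat) (s l : nat -> R) (W : nat -> 'M[R]_D) (WJ : 'M[R]_(1, D)).
Hypothesis hJ : (0 < J)%N.
Hypothesis hs : forall j, (j <= J)%N -> 0 < s j /\ 0 < l j.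
Hypothesis hW : forall j, (j < J)%N -> Iplus (W j).
Hypothesis hWJ : forall k, 0 < WJ ord0 k.
Implicit Types x y z : 'cV[R]_D.
Notation out x y := (neural_output J s l W WJ x y).

Let hJ1 : (J.-1 < J)%N. Proof. by rewrite ltn_predL. Qed.
Let hsJ : 0 < s J /\ 0 < l J. Proof. exact: hs. Qed.
Let WJ0 : forall i k, 0 <= WJ i k.
Proof. by move=> i k; rewrite (ord1 i); apply: ltW. Qed.

Lemma out_sym x y : out x y = out y x.
Proof. by rewrite /neural_output lay_sym. Qed.

Lemma out_ge0 x y : 0 <= out x y.
Proof.
rewrite /neural_output /sigma_vec; apply: mx_ge0 => // k.
by rewrite sigma_nneg ?phi_ge0 // (lay_ge0 hs hW).
Qed.

Lemma out_zero x : out x x = 0.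
Proof.
have [s0 l0] := hsJ.
rewrite /neural_output (lay_zero W hs) // !mxE; apply: big1 => m _.
by rewrite !mxE sigma_nneg // phi0 // mulr0.
Qed.

Lemma out_eq0 x y : out x y = 0 -> x = y.
Proof.
move=> h; apply/matrixP => i k; rewrite (ord1 k).
have [//|ne] := eqVneq (x i ord0) (y i ord0).
have [s0 l0] := hsJ.
suff : 0 < out x y by rewrite h ltxx.
rewrite /neural_output /sigma_vec; apply: (mx_pos (i := i)) => //.
- by move=> m; rewrite sigma_nneg ?phi_ge0 // (lay_ge0 hs hW).
- by rewrite sigma_nneg ?(lay_ge0 hs hW) // phi_gt0 // (lay_pos hs hW).
Qed.

Lemma out_quasi : exists C : R, 1 <= C /\ forall x y z, out x y <= C * (out x z + out z y).
Proof.
have [s0 l0] := hsJ.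
have [C [C1 HC]] := lay_quasi hs hW hJ1.
have C21 : 1 <= 2 * C by lra.
exists ((2 * C) `^ s J * (2 * C) `^ l J); split.
  by apply: mulr_ege1; apply: pw_ge1 => //; apply: ltW.
move=> x y z; rewrite /neural_output /sigma_vec; apply: mx_step => // k.
rewrite !sigma_nneg ?(lay_ge0 hs hW) //; apply: phi_quasi; rewrite ?(lay_ge0 hs hW) //.
Qed.

Lemma out_sub : (forall j, (j <= J)%N -> s j <= 1 /\ l j <= 1) ->
  forall x y z, out x y <= out x z + out z y.
Proof.
move=> h1 x y z.
have [s0 l0] := hsJ; have [s1 l1] := h1 _ (leqnn J).
rewrite -[X in _ <= X]mul1r /neural_output /sigma_vec; apply: mx_step => // k.
rewrite mul1r !sigma_nneg ?(lay_ge0 hs hW) //.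
apply: le_trans (phi_subadd _ _ _ _ _ _) => //; rewrite ?(lay_ge0 hs hW) //.
apply: phi_le => //; rewrite ?(lay_ge0 hs hW) //; exact: (lay_sub hs hW).
Qed.

End Out.

Unset Implicit Arguments. Set Strict Implicit.

Theorem mainTheorem5 (R : realType) (D T : nat)
  (Dist : 'cV[R]_(D + T) -> 'cV[R]_(D + T) -> R) :
  (0 < D)%N ->
  admits_neural_rep Dist ->
  (* (a) quasi-metric on the spatial coordinates R^D *)
  quasi_metric (fun a b : 'cV[R]_D => Dist (col_mx a 0) (col_mx b 0)) /\
  (* (b) metric when all W_j orthogonal and 0 < s_j, l_j <= 1 *)
  (forall (J : nat) (s l : nat -> R) (W : nat -> 'M[R]_D) (WJ : 'M[R]_(1, D)),
      neural_rep Dist J s l W WJ ->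
      (forall j, (j < J)%N -> orthogonal_mx (W j)) ->
      orthogonal_mx WJ ->
      (forall j, (j <= J)%N -> s j <= 1 /\ l j <= 1) ->
      metric (fun a b : 'cV[R]_D => Dist (col_mx a 0) (col_mx b 0))) /\
  (* (c) pseudo-quasi-metric on R^{D+T} when T > 0 *)
  ((0 < T)%N -> pseudo_quasi_metric Dist).
Proof.
move=> _ [J [s [l [W [WJ [hJ [hs [hW [hWJ hD]]]]]]]]].
have hF : forall a b : 'cV[R]_D,
    Dist (col_mx a 0) (col_mx b 0) = neural_output J s l W WJ a b.
  by move=> a b; rewrite hD !col_mxKu.
split; [|split].
- split; [|split; [|split]].
  + by move=> a b; rewrite hF; exact: (out_ge0 hJ hs hW hWJ).
  + move=> a b; rewrite hF; split; first exact: (out_eq0 hJ hs hW hWJ).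
    by move=> ->; apply: (out_zero W WJ hJ hs).
  + by move=> a b; rewrite !hF out_sym.
  + have [C [C1 HC]] := out_quasi hJ hs hW hWJ.
    by exists C; split => // a b c; rewrite !hF.
- move=> J' s' l' W' WJ' [hJ' [hs' [hW' [hWJ' hD']]]] _ _ h1.
  have hF' : forall a b : 'cV[R]_D,
      Dist (col_mx a 0) (col_mx b 0) = neural_output J' s' l' W' WJ' a b.
    by move=> a b; rewrite hD' !col_mxKu.
  split; [|split; [|split]].
  + by move=> a b; rewrite hF'; exact: (out_ge0 hJ' hs' hW' hWJ').
  + move=> a b; rewrite hF'; split; first exact: (out_eq0 hJ' hs' hW' hWJ').
    by move=> ->; apply: (out_zero W' WJ' hJ' hs').
  + by move=> a b; rewrite !hF' out_sym.
  + by move=> a b c; rewrite !hF'; exact: (out_sub hJ' hs' hW' hWJ' h1).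
- move=> _; split; [|split; [|split]].
  + by move=> x y; rewrite hD; exact: (out_ge0 hJ hs hW hWJ).
  + by move=> x; rewrite hD; apply: (out_zero W WJ hJ hs).
  + by move=> x y; rewrite !hD out_sym.
  + have [C [C1 HC]] := out_quasi hJ hs hW hWJ.
    by exists C; split => // x y z; rewrite !hD.
Qed.
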